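(* The following are equivalent: (1) for every group $G$, every transitive function $u:\rho\to G$ is trivial; (2) $A(\Gamma)^N=B(\Gamma)^N$, where $^N$ denotes normal closure in $F(\Gamma)$; (3) every generator $b$ of $B(\Gamma)$ (of the form described in the context) can be written as $b=g_1x_1g_1^{-1}\cdots g_mx_mg_m^{-1}$ for some $m\ge1$, $g_1,\dots,g_m\in F(\Gamma)$ and $x_1,\dots,x_m$ among the generators of $A(\Gamma)$ described in the context.
   Context: $\rho$ is a preorder on $\{1,\dots,n\}$, $\mathcal C$ the poset of its equivalence classes ($i\sim j$ iff $i\rho j$ and $j\rho i$; $\hat i\le\hat j$ iff $i\rho j$). A transitive function on $\rho$ with values in $G$ is $u:\rho\to G$ with $u(i,j)u(j,r)=u(i,r)$ whenever $i\rho j$, $j\rho r$; it is trivial if there are $g_1,\dots,g_n\in G$ with $u(i,j)=g_ig_j^{-1}$ for all $i\rho j$. $\Gamma=(\Gamma_0,\Gamma_1)$ is the directed graph with $\Gamma_0=\mathcal C$ and an arrow from $\alpha$ to $\beta$ iff $\alpha<\beta$ and there is no $\gamma$ with $\alpha<\gamma<\beta$. $F(\Gamma)$ is the free group on $\Gamma_1$. $A(\Gamma)$ is the subgroup generated by all elements $a_1\cdots a_rb_p^{-1}\cdots b_1^{-1}$ where $a_1\cdots a_r$ and $b_1\cdots b_p$ are paths in $\Gamma$ with the same start vertex and the same end vertex. $B(\Gamma)$ is the subgroup generated by all elements $a_1a_2^{\varepsilon_2}\cdots a_m^{\varepsilon_m}$, where $a_1,\dots,a_m$ are arrows forming in this order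 a cycle in the undirected graph underlying $\Gamma$, and $\varepsilon_i=1$ if $a_i$ is traversed in the direction of the cycle determined by $a_1$, $\varepsilon_i=-1$ otherwise. (One has $A(\Gamma)\subseteq B(\Gamma)$.) *)

(* Defs.v *)
From HB Require Import structures.
From mathcomp Require Import all_boot.
Set Implicit Arguments. Unset Strict Implicit. Unset Printing Implicit Defensive.

Definition is_group (G : Type) (mul : G -> G -> G) (one : G) (inv : G -> G) : Prop :=
  [/\ forall x y z, mul x (mul y z) = mul (mul x y) z,
      forall x, mul one x = x &
      forall x, mul (inv x) x = one].

(* The Hasse quiver Gamma of the poset of classes of a preorder rho.   *)
Section Quiver.
Variables (n : nat) (rho : rel 'I_n).

Definition cls (i : 'I_n) : {set 'I_n} := [set j | rho i j && rho j i].
Definition is_cls (A : {set 'I_n}) : bool := [exists i, A == cls i].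
Definition cle (A B : {set 'I_n}) : bool :=
  [exists i, exists j, [&& A == cls i, B == cls j & rho i j]].
Definition clt (A B : {set 'I_n}) : bool := cle A B && (A != B).

Definition is_arrow (a : {set 'I_n} * {set 'I_n}) : bool :=
  [&& is_cls a.1, is_cls a.2, clt a.1 a.2 &
      ~~ [exists C, [&& is_cls C, clt a.1 C & clt C a.2]]].

Definition arrow := {a : {set 'I_n} * {set 'I_n} | is_arrow a}.
Definition src (a : arrow) : {set 'I_n} := (sval a).1.
Definition tgt (a : arrow) : {set 'I_n} := (sval a).2.

(* Free group F(Gamma): elements are represented by words of letters
   (a, true) = a and (a, false) = a^-1, modulo free reduction. *)
Definition word := seq (arrow * bool).
Definition winv (w : word) : word := rev (map (fun l => (l.1, ~~ l.2)) w).

Inductive red1 : word -> word -> Prop :=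
  | red1_intro w1 w2 a e : red1 (w1 ++ (a, e) :: (a, ~~ e) :: w2) (w1 ++ w2).

Inductive freeq : word -> word -> Prop :=
  | freeq_refl w : freeq w w
  | freeq_step w1 w2 : red1 w1 w2 -> freeq w1 w2
  | freeq_sym w1 w2 : freeq w1 w2 -> freeq w2 w1
  | freeq_trans w1 w2 w3 : freeq w1 w2 -> freeq w2 w3 -> freeq w1 w3.

(* (preimage in words of) the normal closure in F(Gamma) of a set S *)
Inductive ncl (S : word -> Prop) : word -> Prop :=
  | ncl_gen x : S x -> ncl S x
  | ncl_one : ncl S [::]
  | ncl_mul x y : ncl S x -> ncl S y -> ncl S (x ++ y)
  | ncl_inv x : ncl S x -> ncl S (winv x)
  | ncl_conj g x : ncl S x -> ncl S (g ++ x ++ winv g)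
  | ncl_freeq x y : freeq x y -> ncl S x -> ncl S y.

Definition pos (a : arrow) : arrow * bool := (a, true).
Definition linked (a b : arrow) : bool := tgt a == src b.

(* generators of A(Gamma): a_1...a_r b_p^-1 ... b_1^-1 for two (nonempty)
   paths a_1...a_r, b_1...b_p with same start and same end vertex *)
Definition Agen (x : word) : Prop :=
  exists (a : arrow) (p : seq arrow) (b : arrow) (q : seq arrow),
    [/\ path linked a p, path linked b q,
        src a = src b, tgt (last a p) = tgt (last b q) &
        x = map pos (a :: p) ++ winv (map pos (b :: q))].

Definition lstart (l : arrow * bool) : {set 'I_n} :=
  if l.2 then src l.1 else tgt l.1.
Definition lfinish (l : arrow * bool) : {set 'I_n} :=
  if l.2 then tgt l.1 else src l.1.
Definition lchain (l1 l2 : arrow * bool) : bool := lfinish l1 == lstart l2.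

(* generators of B(Gamma): a_1 a_2^e2 ... a_m^em for a cycle a_1,...,a_m
   of the underlying undirected graph (distinct vertices, distinct arrows),
   oriented so that a_1 is traversed forwards *)
Definition Bgen (x : word) : Prop :=
  exists (a : arrow) (s : word),
    [/\ x = (a, true) :: s,
        path lchain (a, true) s,
        lfinish (last (a, true) s) = src a,
        uniq (map lstart x) &
        uniq (map fst x)].

End Quiver.

(* Main.v *)
Require Import Defs.
From HB Require Import structures.
From mathcomp Require Import all_boot.
From Stdlib Require Import ProofIrrelevance FunctionalExtensionality PropExtensionality IndefiniteDescription.
Set Implicit Arguments. Unset Strict Implicit. Unset Printing Implicit Defensive.

Section FreeGroup.
Variables (n : nat) (rho : rel 'I_n).
Local Notation word := (word rho).
Local Notation arrow := (arrow rho).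

Definition flipl (l : arrow * bool) := (l.1, ~~ l.2).

Lemma winv_cons (l : arrow * bool) (s : word) : winv (l :: s) = winv s ++ [:: flipl l].
Proof. by rewrite /winv /= rev_cons cats1. Qed.

Lemma winv_cat (x y : word) : winv (x ++ y) = winv y ++ winv x.
Proof. by rewrite /winv map_cat rev_cat. Qed.

Lemma winvK (x : word) : winv (winv x) = x.
Proof.
elim: x => [//|l s IH]; rewrite winv_cons winv_cat IH /=.
by case: l => a e /=; rewrite negbK.
Qed.

Lemma winv_nil : winv ([::] : word) = [::].
Proof. by []. Qed.

Lemma freeq_ctx (p q w1 w2 : word) : freeq w1 w2 -> freeq (p ++ w1 ++ q) (p ++ w2 ++ q).
Proof.
elim=> {w1 w2} [w|w1 w2 H|w1 w2 _ IH|w1 w2 w3 _ IH1 _ IH2].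
- exact: freeq_refl.
- case: H => v1 v2 a e; apply: freeq_step.
  have -> : p ++ (v1 ++ [:: (a, e), (a, ~~ e) & v2]) ++ q
        = (p ++ v1) ++ (a, e) :: (a, ~~ e) :: (v2 ++ q) by rewrite -!catA.
  have -> : p ++ (v1 ++ v2) ++ q = (p ++ v1) ++ (v2 ++ q) by rewrite -!catA.
  exact: red1_intro.
- exact: freeq_sym.
- exact: freeq_trans IH2.
Qed.

Lemma freeq_cat (x x' y y' : word) : freeq x x' -> freeq y y' -> freeq (x ++ y) (x' ++ y').
Proof.
move=> H1 H2; apply: (freeq_trans (w2 := x' ++ y)).
  by have := freeq_ctx [::] y H1; rewrite /= .
by have := freeq_ctx x' [::] H2; rewrite !cats0.
Qed.

Lemma freeq_cancel (w : word) : freeq (w ++ winv w) [::].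
Proof.
elim: w => [|l s IH]; first exact: freeq_refl.
rewrite winv_cons /= catA.
apply: (freeq_trans (w2 := l :: [:: flipl l])).
  by have := freeq_ctx [:: l] [:: flipl l] IH.
case: l => a e; rewrite /flipl /=.
have := @red1_intro _ _ [::] [::] a e; rewrite /= => H; exact: freeq_step H.
Qed.

Lemma freeq_cancel' (w : word) : freeq (winv w ++ w) [::].
Proof. by have := freeq_cancel (winv w); rewrite winvK. Qed.

Lemma freeq_winv (x y : word) : freeq x y -> freeq (winv x) (winv y).
Proof.
elim=> {x y} [w|w1 w2 H|w1 w2 _ IH|w1 w2 w3 _ IH1 _ IH2].
- exact: freeq_refl.
- case: H => v1 v2 a e; apply: freeq_step.
  rewrite !winv_cat !winv_cons /= /flipl /= negbK.
  rewrite -!catA /=; exact: red1_intro.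
- exact: freeq_sym.
- exact: freeq_trans IH2.
Qed.

Lemma ncl_sub (S T : word -> Prop) : (forall x, S x -> ncl T x) -> forall w, ncl S w -> ncl T w.
Proof.
move=> HST w; elim=> {w}.
- exact: HST.
- exact: ncl_one.
- by move=> x y _ H1 _ H2; apply: ncl_mul.
- by move=> x _ H; apply: ncl_inv.
- by move=> g x _ H; apply: ncl_conj.
- by move=> x y H _ H'; apply: ncl_freeq H'.
Qed.

Lemma ncl_triv (S : word -> Prop) (x : word) : freeq x [::] -> ncl S x.
Proof. move=> H; apply: (ncl_freeq (freeq_sym H)); exact: ncl_one. Qed.

Lemma ncl_rot (S : word -> Prop) (u1 u2 : word) : ncl S (u2 ++ u1) -> ncl S (u1 ++ u2).
Proof.
move=> H; have := ncl_conj u1 H; apply: ncl_freeq.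
rewrite !catA -(catA _ u1) -[X in freeq _ X]cats0.
apply: freeq_cat; [exact: freeq_refl | exact: freeq_cancel].
Qed.

End FreeGroup.

Section Grp.
Variables (G : Type) (mul : G -> G -> G) (one : G) (inv : G -> G).
Hypothesis HG : is_group mul one inv.

Lemma mulA x y z : mul x (mul y z) = mul (mul x y) z.
Proof. by case: HG. Qed.
Lemma mul1g x : mul one x = x.
Proof. by case: HG. Qed.
Lemma mulVg x : mul (inv x) x = one.
Proof. by case: HG. Qed.
Lemma mulgV x : mul x (inv x) = one.
Proof.
have e1 : mul x (inv x) = mul (mul (inv (inv x)) (inv x)) (mul x (inv x)) by rewrite mulVg mul1g.
by rewrite e1 -mulA (mulA (inv x) x) mulVg mul1g mulVg.
Qed.
Lemma mulg1 x : mul x one = x.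
Proof. by rewrite -(mulVg x) mulA mulgV mul1g. Qed.
Lemma inv_uniq x y : mul x y = one -> y = inv x.
Proof. by move=> H; rewrite -(mul1g y) -(mulVg x) -mulA H mulg1. Qed.
Lemma invK x : inv (inv x) = x.
Proof. by symmetry; apply: inv_uniq; rewrite mulVg. Qed.
Lemma invM x y : inv (mul x y) = mul (inv y) (inv x).
Proof.
symmetry; apply: inv_uniq.
by rewrite mulA -(mulA x) mulgV mulg1 mulgV.
Qed.
Lemma inv1 : inv one = one.
Proof. by symmetry; apply: inv_uniq; rewrite mul1g. Qed.
Lemma mulKg x y : mul (inv x) (mul x y) = y.
Proof. by rewrite mulA mulVg mul1g. Qed.
Lemma mulgK x y : mul (mul y x) (inv x) = y.
Proof. by rewrite -mulA mulgV mulg1. Qed.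

Section Hom.
Variables (n : nat) (rho : rel 'I_n) (f : arrow rho -> G).

Definition letv (l : arrow rho * bool) := if l.2 then f l.1 else inv (f l.1).
Definition phi (w : word rho) := foldr (fun l acc => mul (letv l) acc) one w.

Lemma phi_cat x y : phi (x ++ y) = mul (phi x) (phi y).
Proof. by elim: x => [|l s IH] /=; rewrite ?mul1g // IH mulA. Qed.

Lemma phi_winv x : phi (winv x) = inv (phi x).
Proof.
elim: x => [|l s IH] /=; first by rewrite inv1.
rewrite winv_cons phi_cat IH invM /= mulg1; congr (mul _ _).
by case: l => a [] //=; rewrite /letv /= invK.
Qed.

Lemma phi_freeq x y : freeq x y -> phi x = phi y.
Proof.
elim=> {x y} [//|w1 w2 H|w1 w2 _ IH|w1 w2 w3 _ IH1 _ IH2].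
- case: H => v1 v2 a e; rewrite !phi_cat /=; congr (mul _ _).
  by rewrite mulA; case: e; rewrite /letv /= ?mulgV ?mulVg mul1g.
- by [].
- by rewrite IH1.
Qed.

Lemma phi_ncl (S : word rho -> Prop) : (forall x, S x -> phi x = one) ->
  forall w, ncl S w -> phi w = one.
Proof.
move=> HS w; elim=> {w}.
- exact: HS.
- by [].
- by move=> x y _ H1 _ H2; rewrite phi_cat H1 H2 mul1g.
- by move=> x _ H; rewrite phi_winv H inv1.
- by move=> g x _ H; rewrite !phi_cat H mul1g phi_winv mulgV.
- by move=> x y H _ H'; rewrite -(phi_freeq H).
Qed.

End Hom.
End Grp.

From mathcomp Require Import zify.

Section Poset.
Variables (n : nat) (rho : rel 'I_n).
Hypotheses (rho_refl : reflexive rho) (rho_trans : transitive rho).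
Local Notation word := (word rho).
Local Notation arrow := (arrow rho).
Local Notation cls := (cls rho).
Local Notation cle := (cle rho).
Local Notation clt := (clt rho).
Local Notation is_cls := (is_cls rho).
Local Notation lstart := (@lstart n rho).
Local Notation lfinish := (@lfinish n rho).

Lemma cls_mem i : i \in cls i.
Proof. by rewrite inE rho_refl. Qed.

Lemma cls_eqP i j : (cls i == cls j) = rho i j && rho j i.
Proof.
apply/eqP/andP => [E|[Hij Hji]].
  have : j \in cls i by rewrite E cls_mem.
  by rewrite inE => /andP.
apply/setP => k; rewrite !inE; apply/andP/andP => [][H1 H2]; split.
- exact: rho_trans H1.
- exact: rho_trans Hij.
- exact: rho_trans H1.
- exact: rho_trans Hji.
Qed.

Lemma cls_eq i j : rho i j -> rho j i -> cls i = cls j.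
Proof. by move=> H1 H2; apply/eqP; rewrite cls_eqP H1. Qed.

Lemma cls_eq_rho i j : cls i = cls j -> rho i j /\ rho j i.
Proof. by move/eqP; rewrite cls_eqP => /andP. Qed.

Lemma cleP A B : cle A B -> exists i j, [/\ A = cls i, B = cls j & rho i j].
Proof.
case/existsP => i /existsP [j] /and3P [/eqP -> /eqP -> H].
by exists i, j.
Qed.

Lemma cle_cls i j : cle (cls i) (cls j) = rho i j.
Proof.
apply/idP/idP => [|H]; last by apply/existsP; exists i; apply/existsP; exists j; rewrite !eqxx H.
case/cleP => i' [j' [E1 E2 H]].
case: (cls_eq_rho E1) => H1 _; case: (cls_eq_rho E2) => _ H2.
exact: rho_trans (rho_trans H H2).
Qed.

Lemma clt_cls i j : clt (cls i) (cls j) = rho i j && ~~ rho j i.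
Proof.
rewrite /clt cle_cls cls_eqP; case: (rho i j) => //.
Qed.

Lemma clt_cle A B : clt A B -> cle A B.
Proof. by case/andP. Qed.

Lemma clt_trans A B C : clt A B -> clt B C -> clt A C.
Proof.
move=> H1 H2.
case/cleP: (clt_cle H1) => i [j [EA EB _]].
case/cleP: (clt_cle H2) => j' [k [EB' EC _]].
move: H1 H2; rewrite EA EC EB; rewrite EB in EB'.
case: (cls_eq_rho EB') => Hj Hj'.
rewrite !clt_cls => /andP [Hij Hji] /andP [Hjk Hkj].
apply/andP; split.
  exact: rho_trans Hij Hjk.
apply/negP => Hki; move/negP: Hkj; apply.
exact: rho_trans Hki Hij.
Qed.

Lemma clt_irr A : clt A A = false.
Proof. by rewrite /clt eqxx andbF. Qed.

Lemma clt_isl A B : clt A B -> is_cls A.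
Proof. by case/clt_cle/cleP => i [j [-> _ _]]; apply/existsP; exists i. Qed.
Lemma clt_isr A B : clt A B -> is_cls B.
Proof. by case/clt_cle/cleP => i [j [_ -> _]]; apply/existsP; exists j. Qed.

Lemma arrow_prop (a : arrow) : is_arrow rho (sval a).
Proof. exact: (svalP a). Qed.

Lemma arrow_clt (a : arrow) : clt (src a) (tgt a).
Proof. by case/and4P: (arrow_prop a). Qed.

Fixpoint iswalk (x : {set 'I_n}) (w : word) (y : {set 'I_n}) : Prop :=
  match w with
  | [::] => x = y
  | l :: s => lstart l = x /\ iswalk (lfinish l) s y
  end.

Lemma iswalk_cat x y z (w1 w2 : word) : iswalk x w1 y -> iswalk y w2 z -> iswalk x (w1 ++ w2) z.
Proof.
elim: w1 x => [|l s IH] x /=; first by move=> ->.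
by case=> H1 H2 H3; split => //; exact: IH.
Qed.

Lemma iswalk_catP x z (w1 w2 : word) : iswalk x (w1 ++ w2) z -> exists y, iswalk x w1 y /\ iswalk y w2 z.
Proof.
elim: w1 x => [|l s IH] x /=; first by move=> H; exists x.
case=> H1 /IH [y [H2 H3]]; by exists y.
Qed.

Lemma lstart_flip (l : arrow * bool) : lstart (flipl l) = lfinish l.
Proof. by case: l => a []. Qed.
Lemma lfinish_flip (l : arrow * bool) : lfinish (flipl l) = lstart l.
Proof. by case: l => a []. Qed.

Lemma iswalk_winv x y (w : word) : iswalk x w y -> iswalk y (winv w) x.
Proof.
elim: w x => [|l s IH] x /=; first by move=> ->.
case=> H1 H2; rewrite winv_cons; apply: iswalk_cat (IH _ H2) _.
by rewrite /= lstart_flip lfinish_flip H1.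
Qed.

Lemma walk1 (l : arrow * bool) (s : word) y :
  iswalk (lfinish l) s y <-> path (@lchain n rho) l s /\ lfinish (last l s) = y.
Proof.
elim: s l => [|l2 s IH] l /=; first by split => // [][].
rewrite IH /lchain; split.
  by case=> E [H1 H2]; rewrite E eqxx.
by case=> /andP [/eqP E H1] H2.
Qed.

Lemma dpath_walk (a : arrow) (p : seq arrow) :
  path (@linked n rho) a p -> iswalk (src a) (map (@pos n rho) (a :: p)) (tgt (last a p)).
Proof.
elim: p a => [|b p IH] a /=; first by [].
case/andP => /eqP E H; split => //.
have -> : lfinish (pos a) = tgt a by [].
rewrite E; exact: IH.
Qed.

Lemma dup_start x (w : word) y : iswalk x w y -> ~~ uniq (map lstart w) ->
  exists u1 u2 u3 v, [/\ w = u1 ++ u2 ++ u3, u2 <> [::] /\ u3 <> [::],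
     iswalk x u1 v, iswalk v u2 v & iswalk v u3 y].
Proof.
elim: w x => [//|l s IH] x /= [Hl Hw]; rewrite negb_and negbK; case/orP => [Hin|Hnu].
- case/mapP: Hin => l2 Hl2 E.
  case/splitPr: Hl2 Hw => s1 s3 Hw.
  case: (iswalk_catP Hw) => m [H1 [H2 H3]].
  exists [::], (l :: s1), (l2 :: s3), x; split => //=.
  split => //; rewrite -Hl E H2 //.
  by split => //; rewrite -Hl E.
- case: (IH _ Hw Hnu) => u1 [u2 [u3 [v [-> H23 H4 H5 H6]]]].
  by exists (l :: u1), u2, u3, v; split.
Qed.

Lemma dup_fst (w : word) : ~~ uniq (map fst w) ->
  exists u1 l u2 l' u3, w = u1 ++ l :: u2 ++ l' :: u3 /\ l.1 = l'.1.
Proof.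
elim: w => [//|l s IH] /=; rewrite negb_and negbK; case/orP.
- case/mapP => l2 Hl2 E; case/splitPr: Hl2 => s1 s3.
  by exists [::], l, s1, l2, s3.
- case/IH => u1 [l1 [u2 [l' [u3 [-> E]]]]].
  by exists (l :: u1), l1, u2, l', u3.
Qed.

Lemma back_walk x (w : word) y : iswalk x w y -> ~~ has snd w -> w <> [::] -> clt y x.
Proof.
elim: w x => [//|l s IH] x /= [Hl Hw]; rewrite negb_or => /andP [Hb Hs] _.
have Hlt : clt (lfinish l) x.
  rewrite -Hl; case: l Hb {Hl Hw} => a [] //= _; exact: arrow_clt.
case: s Hw Hs IH => [/= <- //|l2 s'] Hw Hs IH.
exact: clt_trans (IH _ Hw Hs ltac:(by [])) Hlt.
Qed.

Lemma CW k (w : word) x : size w <= k -> iswalk x w x -> ncl (@Bgen n rho) w.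
Proof.
elim: k w x => [|k IH] w x.
  by case: w => // _ _; exact: ncl_one.
move=> Hs Hw.
case: (altP (w =P [::])) => [->|Hne]; first exact: ncl_one.
case: (boolP (uniq (map lstart w))) => Hu; last first.
  case: (dup_start Hw Hu) => u1 [u2 [u3 [v [Ew [H2 H3] W1 W2 W3]]]].
  have S2 : size u2 <= k.
    move: Hs; rewrite Ew !size_cat; case: u3 {Ew W3} H3 => // ? ? _ /=; lia.
  have S3 : size (u3 ++ u1) <= k.
    move: Hs; rewrite Ew !size_cat; case: u2 {Ew W2 S2} H2 => // ? ? _ /=; lia.
  have N2 := IH _ _ S2 W2.
  have N31 := IH _ _ S3 (iswalk_cat W3 W1).
  rewrite Ew; apply: (ncl_freeq (x := (u1 ++ u2 ++ winv u1) ++ (u1 ++ u3))).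
    by have := freeq_ctx (u1 ++ u2) u3 (freeq_cancel' u1); rewrite -!catA.
  apply: ncl_mul; [exact: ncl_conj | exact: ncl_rot].
case: (boolP (uniq (map fst w))) => Hf; last first.
  case: (dup_fst Hf) => u1 [[a e] [u2 [[a' e'] [u3 [Ew /= Ea]]]]]; subst a'.
  case: (boolP (e' == e)) => [/eqP Ee | Ne].
    subst e'; exfalso; move: Hu; rewrite Ew map_cat cat_uniq => /and3P [_ _] /= /andP [Hn _].
    by move/negP: Hn; apply; rewrite map_cat mem_cat /= inE eqxx orbT.
  have Ee : e' = ~~ e by move: Ne; case: (e) (e') => [] [].
  subst e'; case: u2 Ew => [|l2 u2'] Ew.
    have R : red1 w (u1 ++ u3) by rewrite Ew; exact: red1_intro.
    rewrite Ew in Hw; case: (iswalk_catP Hw) => m [W1 /= [E1 [E2 W3]]].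
    have Em : lfinish (a, ~~ e) = m by rewrite -E1; case: (e).
    rewrite Em in W3.
    have S : size (u1 ++ u3) <= k by move: Hs; rewrite Ew !size_cat /=; lia.
    exact: ncl_freeq (freeq_sym (freeq_step R)) (IH _ _ S (iswalk_cat W1 W3)).
  exfalso; rewrite Ew in Hw Hu; case: (iswalk_catP Hw) => m [W1 /= [E1 [E2 W3]]].
  move: Hu; rewrite map_cat cat_uniq => /and3P [_ _] /= /andP [_ /andP [Hn _]].
  move/negP: Hn; apply; rewrite map_cat mem_cat /= inE E2.
  by case: (e) => /=; rewrite eqxx orbT.
case: (boolP (has snd w)) => Hh; last first.
  by have := back_walk Hw Hh (elimN eqP Hne); rewrite clt_irr.
case/hasP: Hh => l Hl Hl2.
case/splitPr: Hl Hw Hu Hf => u1 u2 Hw Hu Hf.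
case: l Hl2 Hw Hu Hf => a [] // _ Hw Hu Hf.
apply: ncl_rot; apply: ncl_gen.
case: (iswalk_catP Hw) => m [W1 W2].
have Wr := iswalk_cat W2 W1.
case: Wr => /= Em /walk1 [Hp Hlast].
have P : forall (f : arrow * bool -> {set 'I_n}) (s : word), perm_eq (u1 ++ (a, true) :: u2) (((a, true) :: u2) ++ u1).
  by move=> *; rewrite perm_catC perm_refl.
exists a, (u2 ++ u1); split => //.
- by rewrite Hlast -Em.
- by rewrite -(perm_uniq (perm_map _ (P lstart [::]))).
- by rewrite -(perm_uniq (perm_map _ (P lstart [::]))).
Qed.

End Poset.

Section Hasse.
Variables (n : nat) (rho : rel 'I_n).
Hypotheses (rho_refl : reflexive rho) (rho_trans : transitive rho).
Local Notation word := (word rho).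
Local Notation arrow := (arrow rho).
Local Notation cls := (cls rho).
Local Notation clt := (clt rho).
Local Notation is_cls := (is_cls rho).
Local Notation lstart := (@lstart n rho).
Local Notation lfinish := (@lfinish n rho).
Local Notation iswalk := (@iswalk n rho).
Local Notation linked := (@linked n rho).

Definition between A B : {set {set 'I_n}} := [set C | [&& is_cls C, clt A C & clt C B]].

Lemma mk_arrow A B : clt A B -> ~~ [exists C, [&& is_cls C, clt A C & clt C B]] ->
  exists a : arrow, src a = A /\ tgt a = B.
Proof.
move=> Hlt Hn.
have H : is_arrow rho (A, B) by rewrite /is_arrow /= (clt_isl Hlt) (clt_isr Hlt) Hlt.
by exists (exist _ (A, B) H).
Qed.

Lemma hasse_k k A B : #|between A B| <= k -> clt A B ->
  exists (a : arrow) (p : seq arrow), [/\ path linked a p, src a = A & tgt (last a p) = B].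
Proof.
elim: k A B => [|k IH] A B Hk Hlt;
  (case: (boolP [exists C, [&& is_cls C, clt A C & clt C B]]) => Hex;
   last by case: (mk_arrow Hlt Hex) => a [Ha1 Ha2]; exists a, [::]).
  case/existsP: Hex => C HC.
  have : 0 < #|between A B| by apply/card_gt0P; exists C; rewrite inE.
  by rewrite ltnNge Hk.
case/existsP: Hex => C /and3P [HC H1 H2].
have HCin : C \in between A B by rewrite inE HC H1 H2.
have P1 : between A C \proper between A B.
  apply/properP; split; last by exists C => //; rewrite inE clt_irr !andbF.
  apply/subsetP => D; rewrite !inE => /and3P [-> -> HD] /=; exact: clt_trans HD H2.
have P2 : between C B \proper between A B.
  apply/properP; split; last by exists C => //; rewrite inE clt_irr !andbF.
  apply/subsetP => D; rewrite !inE => /and3P [-> HD ->]; rewrite andbT; exact: clt_trans H1 HD.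
have := proper_card P1; have := proper_card P2 => Q2 Q1.
case: (IH A C ltac:(lia) H1) => a1 [p1 [Hp1 Ea1 Eb1]].
case: (IH C B ltac:(lia) H2) => a2 [p2 [Hp2 Ea2 Eb2]].
exists a1, (p1 ++ a2 :: p2); split => //.
  by rewrite cat_path Hp1 /= Hp2 andbT /linked Eb1 Ea2 eqxx.
by rewrite last_cat.
Qed.

Lemma hasse A B : clt A B ->
  exists (a : arrow) (p : seq arrow), [/\ path linked a p, src a = A & tgt (last a p) = B].
Proof. exact: hasse_k (leqnn _). Qed.

Lemma Agen_walk (x : word) : Agen x -> exists v, iswalk v x v.
Proof.
case=> a [p [b [q [Hp Hq Es Et ->]]]]; exists (src a).
apply: iswalk_cat (dpath_walk Hp) _; rewrite Et Es.
exact: iswalk_winv (dpath_walk Hq).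
Qed.

Lemma A_in_B (x : word) : Agen x -> ncl (@Bgen n rho) x.
Proof. by case/Agen_walk => v Hv; exact: (@CW n rho rho_refl rho_trans _ _ _ (leqnn _) Hv). Qed.

Lemma two_of : (forall b : word, Bgen b -> ncl (@Agen n rho) b) ->
  forall w : word, ncl (@Agen n rho) w <-> ncl (@Bgen n rho) w.
Proof. by move=> H w; split; apply: ncl_sub => // x; exact: A_in_B. Qed.

Lemma Bgen_walk (b : word) : Bgen b -> exists v, iswalk v b v.
Proof.
case=> a [s [-> Hp Hl _ _]]; exists (src a); split => //.
by apply/walk1; split.
Qed.

Definition conjw (gx : word * word) : word := gx.1 ++ gx.2 ++ winv gx.1.
Definition prodc (l : seq (word * word)) : word := flatten [seq conjw gx | gx <- l].

Lemma prodc_cat l1 l2 : prodc (l1 ++ l2) = prodc l1 ++ prodc l2.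
Proof. by rewrite /prodc map_cat flatten_cat. Qed.

Lemma prodc_winv l : winv (prodc l) = prodc (rev (map (fun gx => (gx.1, winv gx.2)) l)).
Proof.
elim: l => [//|gx l IH].
rewrite /= rev_cons -cats1 prodc_cat -IH /prodc /= cats0 -/(prodc l) winv_cat.
by rewrite /conjw !winv_cat winvK /= -catA.
Qed.

Lemma Agen_winv (x : word) : Agen x -> Agen (winv x).
Proof.
case=> a [p [b [q [Hp Hq Es Et ->]]]].
exists b, q, a, p; split => //; by rewrite winv_cat winvK.
Qed.

Lemma prodc_conj g l : freeq (g ++ prodc l ++ winv g) (prodc (map (fun gx => (g ++ gx.1, gx.2)) l)).
Proof.
elim: l => [|gx l IH]; first exact: freeq_cancel.
rewrite /= -/(prodc l) -/(prodc (map _ l)).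
apply: (freeq_trans (w2 := (g ++ conjw gx ++ winv g) ++ (g ++ prodc l ++ winv g))).
  apply: freeq_sym.
  have := freeq_ctx (g ++ conjw gx) (prodc l ++ winv g) (freeq_cancel' g).
  by rewrite -!catA.
apply: freeq_cat => //.
by rewrite /conjw /= winv_cat -!catA; exact: freeq_refl.
Qed.

Definition PC (w : word) := exists l, (forall gx, gx \in l -> Agen gx.2) /\ freeq w (prodc l).

Lemma ncl_PC w : ncl (@Agen n rho) w -> PC w.
Proof.
elim=> {w}.
- move=> x Hx; exists [:: ([::], x)]; split.
    by move=> gx; rewrite inE => /eqP ->.
  by rewrite /prodc /conjw /= !cats0; exact: freeq_refl.
- by exists [::]; split => //; exact: freeq_refl.
- move=> x y _ [l1 [H1 F1]] _ [l2 [H2 F2]]; exists (l1 ++ l2); split.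
    by move=> gx; rewrite mem_cat => /orP [/H1|/H2].
  by rewrite prodc_cat; exact: freeq_cat.
- move=> x _ [l [H F]]; exists (rev (map (fun gx => (gx.1, winv gx.2)) l)); split.
    by move=> gx; rewrite mem_rev => /mapP [gx0 /H Hg ->]; exact: Agen_winv.
  rewrite -prodc_winv; exact: freeq_winv.
- move=> g x _ [l [H F]]; exists (map (fun gx => (g ++ gx.1, gx.2)) l); split.
    by move=> gx /mapP [gx0 /H Hg ->].
  exact: freeq_trans (freeq_ctx g (winv g) F) (prodc_conj g l).
- move=> x y Fxy _ [l [H F]]; exists l; split => //.
  exact: freeq_trans (freeq_sym Fxy) F.
Qed.

Lemma PC_ncl l : (forall gx, gx \in l -> Agen gx.2) -> ncl (@Agen n rho) (prodc l).
Proof.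
elim: l => [|gx l IH] H; first exact: ncl_one.
apply: ncl_mul.
  by apply: ncl_conj; apply: ncl_gen; apply: H; rewrite mem_head.
by apply: IH => gx' Hg; apply: H; rewrite inE Hg orbT.
Qed.

Lemma two_three : (forall w : word, ncl (@Agen n rho) w <-> ncl (@Bgen n rho) w) ->
    (forall b : word, Bgen b ->
       exists l : seq (word * word),
         [/\ 0 < size l,
             (forall k, k < size l -> Agen (nth ([::], [::]) l k).2) &
             freeq b (flatten [seq gx.1 ++ gx.2 ++ winv gx.1 | gx <- l])]).
Proof.
move=> H2 b Hb.
have : ncl (@Agen n rho) b by apply/H2; exact: ncl_gen.
case/ncl_PC => l [Hl F].
case: Hb => a [s _].
pose t : word := [:: pos a] ++ winv [:: pos a].
have Ht : Agen t by exists a, [::], a, [::].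
exists (([::], t) :: l); split => //.
  move=> k Hk; have := mem_nth ([::], [::]) Hk; rewrite inE => /orP [/eqP -> //|].
  exact: Hl.
change (freeq b (prodc (([::], t) :: l))).
rewrite /= -/(prodc l).
apply: freeq_trans F _.
have := freeq_cat (freeq_sym (freeq_cancel [:: pos a])) (freeq_refl (prodc l)).
by move=> H; exact: H.
Qed.

Lemma three_two :
    (forall b : word, Bgen b ->
       exists l : seq (word * word),
         [/\ 0 < size l,
             (forall k, k < size l -> Agen (nth ([::], [::]) l k).2) &
             freeq b (flatten [seq gx.1 ++ gx.2 ++ winv gx.1 | gx <- l])]) ->
    (forall w : word, ncl (@Agen n rho) w <-> ncl (@Bgen n rho) w).
Proof.
move=> H3; apply: two_of => b Hb.
case: (H3 b Hb) => l [_ Hl F].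
apply: ncl_freeq (freeq_sym F) _.
apply: (PC_ncl (l := l)) => gx Hg.
by rewrite -(nth_index ([::], [::]) Hg); apply: Hl; rewrite index_mem.
Qed.

End Hasse.

Section Quot.
Variables (n : nat) (rho : rel 'I_n) (S : word rho -> Prop).
Local Notation word := (word rho).

Definition E (x y : word) := ncl S (x ++ winv y).

Lemma E_refl x : E x x.
Proof. exact: ncl_triv (freeq_cancel x). Qed.

Lemma E_sym x y : E x y -> E y x.
Proof. by move/ncl_inv; rewrite /E winv_cat winvK. Qed.

Lemma E_trans x y z : E x y -> E y z -> E x z.
Proof.
move=> H1 H2; have := ncl_mul H1 H2; apply: ncl_freeq.
by have := freeq_ctx x (winv z) (freeq_cancel' y); rewrite -!catA.
Qed.

Lemma E_cat x x' y y' : E x x' -> E y y' -> E (x ++ y) (x' ++ y').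
Proof.
move=> Hx Hy; have := ncl_mul (ncl_conj x Hy) Hx; apply: ncl_freeq.
have := freeq_ctx (x ++ y ++ winv y') (winv x') (freeq_cancel' x).
by rewrite /E winv_cat -!catA /=; apply.
Qed.

Lemma E_winv x y : E x y -> E (winv x) (winv y).
Proof.
move/E_sym=> H; have := ncl_conj (winv x) H; apply: ncl_freeq.
have := freeq_ctx (winv x ++ y) [::] (freeq_cancel' x).
by rewrite /E !winvK !cats0 -!catA /=; apply.
Qed.

Definition Q := {P : word -> Prop | exists w, P = E w}.
Definition cl (w : word) : Q := exist _ (E w) (ex_intro _ w erefl).

Lemma Q_eq (P R : Q) : sval P = sval R -> P = R.
Proof.
case: P R => [p hp] [r hr] /= E1; subst r; f_equal; apply: proof_irrelevance.
Qed.

Lemma cl_eq x y : E x y -> cl x = cl y.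
Proof.
move=> H; apply: Q_eq => /=; apply: functional_extensionality => z.
apply: propositional_extensionality; split => H'.
  exact: E_trans (E_sym H) H'.
exact: E_trans H H'.
Qed.

Lemma cl_E x y : cl x = cl y -> E x y.
Proof.
move=> H; have := f_equal (fun P : Q => sval P y) H => /= ->; exact: E_refl.
Qed.

Lemma Q_rep (P : Q) : exists w, P = cl w.
Proof. by case: P => p [w Ew]; exists w; apply: Q_eq. Qed.

Lemma setmul x z : (fun y => exists x' z', [/\ E x x', E z z' & E (x' ++ z') y]) = E (x ++ z).
Proof.
apply: functional_extensionality => y; apply: propositional_extensionality; split.
  by case=> x' [z' [H1 H2 H3]]; exact: E_trans (E_cat H1 H2) H3.
by move=> H; exists x, z; split => //; exact: E_refl.
Qed.

Lemma setinv x : (fun y => exists x', E x x' /\ E (winv x') y) = E (winv x).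
Proof.
apply: functional_extensionality => y; apply: propositional_extensionality; split.
  by case=> x' [H1 H2]; exact: E_trans (E_winv H1) H2.
by move=> H; exists x; split => //; exact: E_refl.
Qed.

Lemma Qmul_ok (P R : Q) :
  exists w, (fun y => exists x' z', [/\ sval P x', sval R z' & E (x' ++ z') y]) = E w.
Proof.
case: (Q_rep P) => x ->; case: (Q_rep R) => z ->; exists (x ++ z).
exact: setmul.
Qed.

Lemma Qinv_ok (P : Q) : exists w, (fun y => exists x', sval P x' /\ E (winv x') y) = E w.
Proof. case: (Q_rep P) => x ->; exists (winv x); exact: setinv. Qed.

Definition Qmul (P R : Q) : Q := exist _ _ (Qmul_ok P R).
Definition Qinv (P : Q) : Q := exist _ _ (Qinv_ok P).
Definition Qone : Q := cl [::].

Lemma Qmul_cl x z : Qmul (cl x) (cl z) = cl (x ++ z).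
Proof. apply: Q_eq; exact: setmul. Qed.

Lemma Qinv_cl x : Qinv (cl x) = cl (winv x).
Proof. apply: Q_eq; exact: setinv. Qed.

Lemma Q_group : is_group Qmul Qone Qinv.
Proof.
split.
- move=> P R T; case: (Q_rep P) => x ->; case: (Q_rep R) => y ->; case: (Q_rep T) => z ->.
  by rewrite !Qmul_cl catA.
- by move=> P; case: (Q_rep P) => x ->; rewrite /Qone Qmul_cl.
- move=> P; case: (Q_rep P) => x ->; rewrite Qinv_cl Qmul_cl /Qone; apply: cl_eq.
  by apply: ncl_triv; rewrite cats0; exact: freeq_cancel'.
Qed.

End Quot.

Lemma phi_cons (G : Type) (mul : G -> G -> G) (one : G) (inv : G -> G) n (rho : rel 'I_n)
  (f : arrow rho -> G) l s : phi mul one inv f (l :: s) = mul (letv inv f l) (phi mul one inv f s).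
Proof. by []. Qed.

Section Main.
Variables (n : nat) (rho : rel 'I_n).
Hypotheses (rho_refl : reflexive rho) (rho_trans : transitive rho).
Local Notation word := (word rho).
Local Notation arrow := (arrow rho).
Local Notation cls := (cls rho).
Local Notation cle := (cle rho).
Local Notation clt := (clt rho).
Local Notation is_cls := (is_cls rho).
Local Notation lstart := (@lstart n rho).
Local Notation lfinish := (@lfinish n rho).
Local Notation iswalk := (@iswalk n rho).
Local Notation linked := (@linked n rho).
Local Notation pos := (@pos n rho).

Lemma phi_walk (G : Type) (mul : G -> G -> G) (one : G) (inv : G -> G) (HG : is_group mul one inv)
  (f : arrow -> G) (h : {set 'I_n} -> G) :
  (forall a, f a = mul (h (src a)) (inv (h (tgt a)))) ->
  forall x w y, iswalk x w y -> phi mul one inv f w = mul (h x) (inv (h y)).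
Proof.
move=> fh x w; elim: w x => [|l s IH] x y /=.
  by move=> ->; rewrite (mulgV HG).
case=> Hl Hw; rewrite -/(phi mul one inv f s) (IH _ _ Hw).
have -> : letv inv f l = mul (h (lstart l)) (inv (h (lfinish l))).
  case: l {Hl Hw} => a [] /=; rewrite /letv /= fh //.
  by rewrite (invM HG) // (invK HG).
by rewrite Hl -(mulA HG) // (mulA HG (inv _)) (mulVg HG) // (mul1g HG).
Qed.

Lemma dpath_clt (a : arrow) p : path linked a p -> clt (src a) (tgt (last a p)).
Proof.
elim: p a => [|b p IH] a /=; first by move=> _; exact: arrow_clt.
case/andP => /eqP E Hp; apply: (clt_trans rho_refl rho_trans (arrow_clt a)); rewrite E; exact: IH.
Qed.

Lemma two_one : (forall w : word, ncl (@Agen n rho) w <-> ncl (@Bgen n rho) w) ->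
    (forall (G : Type) (mul : G -> G -> G) (one : G) (inv : G -> G),
        is_group mul one inv ->
        forall u : 'I_n -> 'I_n -> G,
          (forall i j r, rho i j -> rho j r -> mul (u i j) (u j r) = u i r) ->
          exists g : 'I_n -> G, forall i j, rho i j -> u i j = mul (g i) (inv (g j))).
Proof.
move=> H2 G mul one inv HG u Hu.
pose r i := odflt i [pick x in cls i].
have r_pick i : [pick x in cls i] = Some (r i) /\ rho i (r i) && rho (r i) i.
  rewrite /r; case: pickP => [x Hx|H] /=; first by rewrite inE in Hx.
  by have := H i; rewrite (cls_mem rho_refl).
have rr i j : rho i j -> rho (r i) (r j).
  move=> Hij; case/andP: (r_pick i).2 => _ H1; case/andP: (r_pick j).2 => H2' _.
  exact: rho_trans H1 (rho_trans Hij H2').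
pose U (A B : {set 'I_n}) :=
  match [pick x in A], [pick y in B] with Some x, Some y => u x y | _, _ => one end.
have Ucls i j : U (cls i) (cls j) = u (r i) (r j) by rewrite /U (r_pick i).1 (r_pick j).1.
have Urefl i : U (cls i) (cls i) = one.
  have E := Hu _ _ _ (rho_refl (r i)) (rho_refl (r i)).
  by rewrite Ucls -[LHS](mulKg HG (u (r i) (r i))) E (mulVg HG).
have Utrans A B C : cle A B -> cle B C -> mul (U A B) (U B C) = U A C.
  move=> /cleP [i [j [-> -> Hij]]] /cleP [j' [k [Ej -> Hjk]]].
  case: (cls_eq_rho rho_refl rho_trans Ej) => Hjj' _.
  rewrite !Ucls; apply: Hu; first exact: rr.
  exact: rr (rho_trans Hjj' Hjk).
pose f (a : arrow) := U (src a) (tgt a).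
have phi_path a p : path linked a p -> phi mul one inv f (map pos (a :: p)) = U (src a) (tgt (last a p)).
  elim: p a => [|b p IH] a.
    by move=> _; rewrite /= (mulg1 HG).
  rewrite [path _ _ _]/= => /andP [/eqP E Hp].
  have -> : map pos [:: a, b & p] = pos a :: map pos (b :: p) by [].
  rewrite phi_cons IH //.
  have -> : letv inv f (pos a) = U (src a) (tgt a) by [].
  rewrite E; apply: Utrans; last exact: clt_cle (dpath_clt Hp).
  by rewrite -E; exact: clt_cle (arrow_clt a).
have phiA x : Agen x -> phi mul one inv f x = one.
  case=> a [p [b [q [Hp Hq Es Et ->]]]].
  by rewrite (phi_cat HG) // (phi_winv HG) // !phi_path // Es Et (mulgV HG).
have phiW x w : iswalk x w x -> phi mul one inv f w = one.
  move=> Hw; apply: (phi_ncl HG phiA); apply/H2.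
  exact: (@CW n rho rho_refl rho_trans _ _ _ (leqnn _) Hw).
pose e := fun A B : {set 'I_n} =>
  [exists a : arrow, ((src a == A) && (tgt a == B)) || ((src a == B) && (tgt a == A))].
have esym : symmetric e by move=> A B; apply: eq_existsb => a; rewrite orbC.
have csym := sym_connect_sym esym.
have epath A p : path e A p -> exists w, iswalk A w (last A p).
  elim: p A => [|B p IH] A /=; first by exists [::].
  case/andP => /existsP [a Ha] /IH [w Hw].
  case/orP: Ha => /andP [/eqP E1 /eqP E2].
    exists (pos a :: w); split; first by rewrite -E1.
    by change (iswalk (tgt a) w (last B p)); rewrite E2.
  exists ((a, false) :: w); split; first by rewrite -E2.
  by change (iswalk (src a) w (last B p)); rewrite E1.
have exW A : exists w, iswalk (root e A) w A.
  have : connect e (root e A) A by rewrite csym connect_root.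
  case/connectP => p Hp E; rewrite {2}E; exact: epath Hp.
pose W A := proj1_sig (constructive_indefinite_description _ (exW A)).
have HW A : iswalk (root e A) (W A) A := proj2_sig (constructive_indefinite_description _ (exW A)).
pose h A := inv (phi mul one inv f (W A)).
have fh a : f a = mul (h (src a)) (inv (h (tgt a))).
  have Hr : root e (src a) = root e (tgt a).
    apply/(rootP csym); apply: connect1; apply/existsP; exists a; by rewrite !eqxx.
  have Hw : iswalk (root e (src a)) (W (src a) ++ [:: pos a] ++ winv (W (tgt a))) (root e (src a)).
    apply: iswalk_cat (HW _) _; apply: (iswalk_cat (y := tgt a)); first by split.
    rewrite Hr; exact: iswalk_winv.
  have := phiW _ _ Hw; rewrite !(phi_cat HG) // (phi_winv HG) // /h (invK HG) //.
  rewrite phi_cons /= (mulg1 HG) // => E1.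
  have E' := inv_uniq HG E1.
  by rewrite -E' -(mulA HG) // (mulVg HG) // (mulg1 HG).
have Uh i j : rho i j -> U (cls i) (cls j) = mul (h (cls i)) (inv (h (cls j))).
  move=> Hij; case: (boolP (rho j i)) => Hji.
    by rewrite (cls_eq rho_refl rho_trans Hij Hji) Urefl (mulgV HG).
  have Hlt : clt (cls i) (cls j) by rewrite (clt_cls rho_refl rho_trans) Hij Hji.
  case: (hasse rho_refl rho_trans Hlt) => a [p [Hp Ea Eb]].
  rewrite -Ea -Eb -phi_path //; apply: (phi_walk HG fh); exact: dpath_walk Hp.
exists (fun i => mul (u i (r i)) (h (cls i))) => i j Hij /=.
case/andP: (r_pick i).2 => Hiri Hrii; case/andP: (r_pick j).2 => Hjrj Hrjj.
rewrite (invM HG) // -!(mulA HG) // (mulA HG (h (cls i))) -(Uh i j Hij) Ucls (mulA HG) //.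
rewrite (Hu _ _ _ Hiri (rr _ _ Hij)) -(Hu _ _ _ Hij Hjrj).
by rewrite (mulgK HG).
Qed.

End Main.

Section Main2.
Variables (n : nat) (rho : rel 'I_n).
Hypotheses (rho_refl : reflexive rho) (rho_trans : transitive rho).
Local Notation word := (word rho).
Local Notation arrow := (arrow rho).
Local Notation cls := (cls rho).
Local Notation cle := (cle rho).
Local Notation clt := (clt rho).
Local Notation is_cls := (is_cls rho).
Local Notation lstart := (@lstart n rho).
Local Notation lfinish := (@lfinish n rho).
Local Notation iswalk := (@iswalk n rho).
Local Notation linked := (@linked n rho).
Local Notation pos := (@pos n rho).

Lemma one_two :
    (forall (G : Type) (mul : G -> G -> G) (one : G) (inv : G -> G),
        is_group mul one inv ->
        forall u : 'I_n -> 'I_n -> G,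
          (forall i j r, rho i j -> rho j r -> mul (u i j) (u j r) = u i r) ->
          exists g : 'I_n -> G, forall i j, rho i j -> u i j = mul (g i) (inv (g j))) ->
    (forall w : word, ncl (@Agen n rho) w <-> ncl (@Bgen n rho) w).
Proof.
move=> H1; apply: (two_of rho_refl rho_trans) => b Hb.
pose A := @Agen n rho.
have hp_ex : forall B C : {set 'I_n}, exists w : word,
    (clt B C -> exists a p, [/\ path linked a p, src a = B, tgt (last a p) = C & w = map pos (a :: p)])
    /\ (~~ clt B C -> w = [::]).
  move=> B C; case: (boolP (clt B C)) => H.
    case: (hasse rho_refl rho_trans H) => a [p [Hp Ea Eb]].
    by exists (map pos (a :: p)); split => // _; exists a, p.
  by exists [::].
have [hp Hhp] : exists hp : {set 'I_n} -> {set 'I_n} -> word, forall B C,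
    (clt B C -> exists a p, [/\ path linked a p, src a = B, tgt (last a p) = C & hp B C = map pos (a :: p)])
    /\ (~~ clt B C -> hp B C = [::]).
  exists (fun B C => proj1_sig (constructive_indefinite_description _ (hp_ex B C))) => B C.
  exact: proj2_sig (constructive_indefinite_description _ (hp_ex B C)).
have hp0 B C : ~~ clt B C -> hp B C = [::] by move=> H; exact: (Hhp B C).2 H.
pose u i j := cl A (hp (cls i) (cls j)).
have Hu : forall i j k, rho i j -> rho j k -> Qmul (u i j) (u j k) = u i k.
  move=> i j k Hij Hjk; rewrite /u Qmul_cl; apply: cl_eq.
  case: (boolP (rho j i)) => Hji.
    rewrite (cls_eq rho_refl rho_trans Hij Hji) hp0 ?clt_irr //; exact: E_refl.
  case: (boolP (rho k j)) => Hkj.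
    rewrite -(cls_eq rho_refl rho_trans Hjk Hkj) (hp0 (cls j)) ?clt_irr // cats0; exact: E_refl.
  have L1 : clt (cls i) (cls j) by rewrite (clt_cls rho_refl rho_trans) Hij Hji.
  have L2 : clt (cls j) (cls k) by rewrite (clt_cls rho_refl rho_trans) Hjk Hkj.
  have L3 := clt_trans rho_refl rho_trans L1 L2.
  case: ((Hhp _ _).1 L1) => a1 [p1 [Hp1 Ea1 Eb1 ->]].
  case: ((Hhp _ _).1 L2) => a2 [p2 [Hp2 Ea2 Eb2 ->]].
  case: ((Hhp _ _).1 L3) => a3 [p3 [Hp3 Ea3 Eb3 ->]].
  apply: ncl_gen; exists a1, (p1 ++ a2 :: p2), a3, p3; split.
  - by rewrite cat_path Hp1 /= Hp2 andbT /linked Eb1 Ea2 eqxx.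
  - exact: Hp3.
  - by rewrite Ea1 Ea3.
  - by rewrite last_cat /= Eb2 Eb3.
  - by rewrite -map_cat.
case: (H1 _ _ _ _ (Q_group A) u Hu) => g Hg.
case: (Hb) => a [s [Eb _ _ _ _]].
case/existsP: (clt_isl (arrow_clt a)) => i0 _.
pose ri (C : {set 'I_n}) := odflt i0 [pick x in C].
have ri_cls i : cls (ri (cls i)) = cls i.
  rewrite /ri; case: pickP => [x Hx|H] /=.
    rewrite inE in Hx; case/andP: Hx => H1' H2'; apply: (cls_eq rho_refl rho_trans H2' H1').
  by have := H i; rewrite (cls_mem rho_refl).
pose h C := g (ri C).
have fh (a' : arrow) : cl A [:: pos a'] = Qmul (h (src a')) (Qinv (h (tgt a'))).
  have Hlt := arrow_clt a'.
  case/cleP: (clt_cle Hlt) => i [j [Ei Ej _]].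
  have Hxy : rho (ri (cls i)) (ri (cls j)).
    by rewrite -(cle_cls rho_refl rho_trans) !ri_cls -Ei -Ej clt_cle.
  rewrite /h Ei Ej -(Hg _ _ Hxy) /u !ri_cls -Ei -Ej.
  apply: cl_eq.
  case: ((Hhp _ _).1 Hlt) => a2 [p2 [Hp2 Ea2 Eb2 ->]].
  by apply: ncl_gen; exists a', [::], a2, p2; split => //; rewrite Ea2.
have phi_cl w : phi (@Qmul n rho A) (Qone A) (@Qinv n rho A) (fun a' => cl A [:: pos a']) w = cl A w.
  elim: w => [//|l s0 IH]; rewrite phi_cons IH.
  case: l => a' [] /=; rewrite /letv /= ?Qinv_cl Qmul_cl //.
case: (Bgen_walk Hb) => v Hv.
have := phi_walk (Q_group A) fh Hv; rewrite phi_cl (mulgV (Q_group A)).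
move/cl_E; rewrite /E /= cats0 //.
Qed.

End Main2.

Theorem proposition5p6 (n : nat) (rho : rel 'I_n)
    (rho_refl : reflexive rho) (rho_trans : transitive rho) :
  [<->
    (* (1) every transitive function on rho, in every group, is trivial *)
    (forall (G : Type) (mul : G -> G -> G) (one : G) (inv : G -> G),
        is_group mul one inv ->
        forall u : 'I_n -> 'I_n -> G,
          (forall i j r, rho i j -> rho j r -> mul (u i j) (u j r) = u i r) ->
          exists g : 'I_n -> G, forall i j, rho i j -> u i j = mul (g i) (inv (g j)));
    (* (2) A(Gamma)^N = B(Gamma)^N in F(Gamma) *)
    (forall w : word rho, ncl (@Agen n rho) w <-> ncl (@Bgen n rho) w);
    (* (3) every generator of B(Gamma) is a product of m >= 1 conjugates
           of generators of A(Gamma) *)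
    (forall b : word rho, Bgen b ->
       exists l : seq (word rho * word rho),
         [/\ 0 < size l,
             (forall k, k < size l -> Agen (nth ([::], [::]) l k).2) &
             freeq b (flatten [seq gx.1 ++ gx.2 ++ winv gx.1 | gx <- l])])].
Proof.
tfae.
- exact: one_two.
- exact: two_three.
- move=> H3; apply: two_one => //; exact: three_two.
Qed.
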